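(* For every integer $n\ge 4$, $\chi_{ei}(C_5\square C_n)=5$.
   Context: All graphs are finite and simple. $C_k$ denotes the cycle on $k$ vertices. A path $P_4$ in $G$ is a sequence $uxyv$ of four distinct vertices with $ux,xy,yv\in E(G)$; $u,v$ are its end vertices. An $e$-injective $k$-coloring of $G$ is a function $f:V(G)\to\{1,\dots,k\}$ with $f(u)\ne f(v)$ whenever $u,v$ are the end vertices of some path $P_4$ in $G$; $\chi_{ei}(G)$ is the least such $k$. In the Cartesian product $G\square H$ two vertices are adjacent if they are adjacent in one coordinate and equal in the other. *)

(* Defs.v *)
From mathcomp Require Import all_boot.
Set Implicit Arguments. Unset Strict Implicit. Unset Printing Implicit Defensive.

Definition cycle_rel (k : nat) : rel 'I_k :=
  fun i j => (j == (i.+1 %% k) :> nat) || (i == (j.+1 %% k) :> nat).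

Definition box_rel (T U : finType) (e1 : rel T) (e2 : rel U) : rel (T * U) :=
  fun p q => (e1 p.1 q.1 && (p.2 == q.2)) || ((p.1 == q.1) && e2 p.2 q.2).

Definition P4_ends (T : finType) (e : rel T) (u v : T) : Prop :=
  exists x y : T, uniq [:: u; x; y; v] /\ e u x /\ e x y /\ e y v.

Definition ei_coloring (T : finType) (e : rel T) (k : nat) (f : T -> 'I_k) : Prop :=
  forall u v : T, P4_ends e u v -> f u <> f v.

Definition has_ei_coloring (T : finType) (e : rel T) (k : nat) : Prop :=
  exists f : T -> 'I_k, ei_coloring e f.

Definition chi_ei_eq (T : finType) (e : rel T) (k : nat) : Prop :=
  has_ei_coloring e k /\ forall k', has_ei_coloring e k' -> k <= k'.

Definition C5_box_Cn (n : nat) : rel ('I_5 * 'I_n) :=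
  box_rel (@cycle_rel 5) (@cycle_rel n).
Arguments C5_box_Cn n : clear implicits.

(* Main.v *)
Require Import Defs.
From mathcomp Require Import all_boot zify.

Lemma c5_no_tri (a b c : 'I_5) : @cycle_rel 5 a b -> @cycle_rel 5 b c -> @cycle_rel 5 c a -> False.
Proof.
case: a b c => a Ha [b Hb] [c Hc]; rewrite /cycle_rel /=.
by move=> /orP[/eqP ? | /eqP ?] /orP[/eqP ? | /eqP ?] /orP[/eqP ? | /eqP ?]; lia.
Qed.

Definition md5 (x : nat) : 'I_5 := Ordinal (@ltn_pmod x 5 isT).

Lemma c5_path (i i' : 'I_5) : i != i' -> ~~ @cycle_rel 5 i i' ->
  exists a b : 'I_5, [&& uniq [:: i; a; b; i'], @cycle_rel 5 i a, @cycle_rel 5 a b & @cycle_rel 5 b i'].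
Proof.
case: i i' => i Hi [i' Hi']; rewrite /cycle_rel /= -val_eqE /= => Hne Hna.
case: (boolP (i' == (i+2) %% 5)) => H2.
- exists (md5 (i+4)), (md5 (i+3)); rewrite /= !inE -!val_eqE /=. lia.
- exists (md5 (i+1)), (md5 (i+2)); rewrite /= !inE -!val_eqE /=. lia.
Qed.

Definition hn (n j : nat) : nat :=
  if n %% 2 == 1 then (if j < n - 5 then j %% 2 else j - (n - 5)) else j %% 2.

Definition c5n (x y : nat) : bool := (y %% 5 == (x %% 5).+1 %% 5) || (x %% 5 == (y %% 5).+1 %% 5).

Lemma hn_step (n j : nat) : 4 <= n -> j < n -> c5n (hn n j) (hn n (j.+1 %% n)).
Proof.
move=> Hn Hj; rewrite /c5n /hn.
have [Hlt|Hge] := ltnP j.+1 n.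
- rewrite (modn_small Hlt).
  case: ifP => /eqP Hodd; last (apply/orP; lia).
  do 2 case: ifP => ?; apply/orP; lia.
- have -> : j.+1 = n by lia.
  rewrite modnn mod0n.
  case: ifP => /eqP Hodd; last (apply/orP; lia).
  do 2 case: ifP => ?; rewrite ?mod0n; apply/orP; lia.
Qed.

Lemma hn_hom (n : nat) (j j' : 'I_n) : 4 <= n -> @cycle_rel n j j' -> c5n (hn n j) (hn n j').
Proof.
move=> Hn; rewrite /cycle_rel => /orP[/eqP -> | /eqP E].
- exact: hn_step (ltn_ord j).
- rewrite E; have := @hn_step n j' Hn (ltn_ord j'); rewrite /c5n orbC; exact.
Qed.

Definition col (n : nat) (p : 'I_5 * 'I_n) : 'I_5 := md5 (p.1 + hn n p.2).

Lemma col_hom (n : nat) (p q : 'I_5 * 'I_n) : 4 <= n -> C5_box_Cn n p q -> @cycle_rel 5 (col n p) (col n q).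
Proof.
move=> Hn; case: p q => i j [i' j']; rewrite /C5_box_Cn /box_rel /=.
case/orP => /andP[].
- rewrite /cycle_rel /= => Hc /eqP <-; move: (ltn_ord i) (ltn_ord i') => ? ?; apply/orP.
  by case/orP: Hc => /eqP ?; lia.
- move=> /eqP <- Hc; have := @hn_hom n j j' Hn Hc; rewrite /c5n /cycle_rel /=.
  by case/orP => /eqP ?; apply/orP; lia.
Qed.

Lemma hom_ei (T : finType) (e : rel T) (f : T -> 'I_5) :
  (forall p q, e p q -> @cycle_rel 5 (f p) (f q)) -> ei_coloring e f.
Proof.
move=> Hf u v [x [y [_ [Hux [Hxy Hyv]]]]] E.
apply: (@c5_no_tri (f u) (f x) (f y) (Hf _ _ Hux) (Hf _ _ Hxy)); rewrite E; exact: Hf.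
Qed.


Theorem theorem4p8 (n : nat) : 4 <= n -> chi_ei_eq (C5_box_Cn n) 5.
Proof.
move=> Hn; split.
- exists (col n); apply: hom_ei => p q; exact: col_hom.
- move=> k [f Hf].
  have H0 : 0 < n by lia.
  have H1 : 1 < n by lia.
  pose j0 := Ordinal H0; pose j1 := Ordinal H1.
  have Hc01 : @cycle_rel n j0 j1 by rewrite /cycle_rel /= modn_small.
  have Hc10 : @cycle_rel n j1 j0 by rewrite /cycle_rel orbC.
  have Hinj : injective (fun i : 'I_5 => f (i, j0)).
    move=> i i' E; apply/eqP; apply/negPn/negP => Hne; apply: (Hf _ _ _ E).
    case: (boolP (@cycle_rel 5 i i')) => Hii.
    + exists (i, j1), (i', j1); split; [|split; [|split]].
      * move: Hne; rewrite /= !inE !xpair_eqE -!val_eqE /= => Hne; lia.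
      * by rewrite /C5_box_Cn /box_rel /= eqxx Hc01 orbT.
      * by rewrite /C5_box_Cn /box_rel /= eqxx Hii.
      * by rewrite /C5_box_Cn /box_rel /= eqxx Hc10 orbT.
    + have [a [b /and4P[Hu Ha Hab Hb]]] := @c5_path i i' Hne Hii.
      exists (a, j0), (b, j0); split; [|split; [|split]].
      * by apply: (@map_uniq _ _ fst); exact: Hu.
      * by rewrite /C5_box_Cn /box_rel /= eqxx Ha.
      * by rewrite /C5_box_Cn /box_rel /= eqxx Hab.
      * by rewrite /C5_box_Cn /box_rel /= eqxx Hb.
  by have := leq_card _ Hinj; rewrite !card_ord.
Qed.
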